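(* Let $G=(V,E)$ be a finite, connected graph with vertex set $V=\{v_1,\dots,v_n\}$, let $W:V\to\mathbb{R}$ be an arbitrary potential, and let $L=D-A$ be the graph Laplacian, where $D$ is the diagonal degree matrix and $A$ is the adjacency matrix. Suppose $\phi:V\to\mathbb{R}$ and $E\in\mathbb{R}$ satisfy $L\phi+W\phi=E\phi$. Then for all $v\in V$, $$|\phi(v)|\le e^{-\rho_E(v)}\cdot\|\phi\|_{\ell^\infty},$$ where $$\rho_E(v)=\inf\left\{\sum_{i=1}^{\ell}\log\left(1+\frac{(W(v_i)-E)_+}{\deg(v_i)}\right): v=v_1\to v_2\to\dots\to v_\ell \text{ is a path in } G \text{ with } W(v_\ell)\le E\right\},$$ and $(x)_+=\max\{x,0\}$.
   Context: $D\in\mathbb{R}^{n\times n}$ is diagonal with $d_{ii}=\deg(v_i)$; $A_{ij}=1$ if $(v_i,v_j)\in E$ and $0$ otherwise; $(W\phi)(v)=W(v)\phi(v)$. The infimum in $\rho_E(v)$ ranges over all paths starting at $v$ and ending at some vertex in the ''allowed region'' $\{u\in V: W(u)\le E\}$ (in particular $\rho_E(v)=0$ if $W(v)\le E$). $\|\phi\|_{\ell^\infty}=\max_{u\in V}|\phi(u)|$. *)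

(* Defs.v *)
From HB Require Import structures.
From mathcomp Require Import all_boot all_order all_algebra.
From mathcomp Require Import all_classical all_reals all_analysis.
Set Implicit Arguments. Unset Strict Implicit. Unset Printing Implicit Defensive.
Import Order.TTheory GRing.Theory Num.Theory.
Local Open Scope ring_scope.
Local Open Scope classical_set_scope.

Definition simple_graph (V : finType) (e : rel V) : Prop :=
  symmetric e /\ irreflexive e.

Definition graph_connected (V : finType) (e : rel V) : Prop :=
  forall x y : V, connect e x y.

Definition deg (V : finType) (e : rel V) (x : V) : nat := #|[set y | e x y]|.

Definition schrodinger_eq (R : realType) (V : finType) (e : rel V)
    (W phi : V -> R) (E : R) : Prop :=
  forall v : V,
    (deg e v)%:R * phi v - \sum_(u | e v u) phi u + W v * phi v = E * phi v.

Definition pospart (R : realType) (x : R) : R := Num.max x 0.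

Definition vweight (R : realType) (V : finType) (e : rel V)
    (W : V -> R) (E : R) (x : V) : R :=
  ln (1 + pospart (W x - E) / (deg e x)%:R).

(* a path v = v_1 -> ... -> v_l in G is represented by v :: s with
   consecutive vertices adjacent and all vertices distinct *)
Definition is_path_from (V : finType) (e : rel V) (v : V) (s : seq V) : Prop :=
  path e v s /\ uniq (v :: s).

(* rho_E(v) as an extended real infimum (= +oo if no admissible path) *)
Definition rhoE (R : realType) (V : finType) (e : rel V)
    (W : V -> R) (E : R) (v : V) : \bar R :=
  ereal_inf [set ((\sum_(x <- v :: s) vweight e W E x)%:E : \bar R) |
             s in [set s : seq V | is_path_from e v s /\ W (last v s) <= E]].

Definition linf_norm (R : realType) (V : finType) (phi : V -> R) : R :=
  \big[Num.max/0]_(u : V) `|phi u|.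

(* Main.v *)
Require Import Defs.
From HB Require Import structures.
From mathcomp Require Import all_boot all_order all_algebra.
From mathcomp Require Import all_classical all_reals all_analysis.
From mathcomp.algebra_tactics Require Import ring lra.
Import Order.TTheory GRing.Theory Num.Theory.
Local Open Scope ring_scope.
Set Implicit Arguments. Unset Strict Implicit.

Lemma vweight_ge0 (R : realType) (V : finType) (e : rel V) (W : V -> R) (E : R) x :
  0 <= vweight e W E x.
Proof.
rewrite /vweight; apply: ln_ge0; rewrite lerDl; apply: divr_ge0 => //.
by rewrite /pospart le_max lexx orbT.
Qed.

Lemma vweight_allowed (R : realType) (V : finType) (e : rel V) (W : V -> R) (E : R) x :
  W x <= E -> vweight e W E x = 0.
Proof.
move=> h; rewrite /vweight /pospart max_r ?subr_le0 //.
by rewrite mul0r addr0 ln1.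
Qed.

Lemma rho_ge0 (R : realType) (V : finType) (e : rel V) (W : V -> R) (E : R) v :
  (0 <= rhoE e W E v)%E.
Proof.
apply/ereal_infP => y [s _ <-]; rewrite lee_fin.
by apply: sumr_ge0 => x _; apply: vweight_ge0.
Qed.

Lemma rho_allowed (R : realType) (V : finType) (e : rel V) (W : V -> R) (E : R) v :
  W v <= E -> (rhoE e W E v <= 0)%E.
Proof.
move=> hv; apply: ge_ereal_inf.
exists ((\sum_(x <- [:: v]) vweight e W E x)%:E).
  by exists [::] => //; split => //; split.
by rewrite big_seq1 vweight_allowed.
Qed.

Lemma rho_path (R : realType) (V : finType) (e : rel V) (W : V -> R) (E : R) v u s :
  e v u -> path e u s -> uniq (u :: s) -> W (last u s) <= E ->
  (rhoE e W E v <= (vweight e W E v + \sum_(x <- u :: s) vweight e W E x)%:E)%E.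
Proof.
move=> evu pus uus hl.
have key : forall p, path e v p -> uniq (v :: p) -> W (last v p) <= E ->
    \sum_(x <- v :: p) vweight e W E x <=
    vweight e W E v + \sum_(x <- u :: s) vweight e W E x ->
    (rhoE e W E v <= (vweight e W E v + \sum_(x <- u :: s) vweight e W E x)%:E)%E.
  move=> p pp up lp hle; apply: ge_ereal_inf.
  exists ((\sum_(x <- v :: p) vweight e W E x)%:E); last by rewrite lee_fin.
  by exists p.
have [vu|nvu] := eqVneq v u.
  subst u; apply: (key s) => //.
  by rewrite -[X in X <= _]add0r lerD2r vweight_ge0.
have [vs|nvs] := boolP (v \in s).
  move: pus uus hl key; case/splitPr: vs => p1 p2.
  rewrite cat_path last_cat /= => /andP[_ /andP[_ pp2]].
  rewrite -cat_cons cat_uniq => /and3P[_ _ /andP[_ up2]] hl key.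
  apply: (key p2) => //.
  rewrite big_cat /= addrA -[X in X <= _]add0r lerD2r.
  apply: addr_ge0; first exact: vweight_ge0.
  by apply: sumr_ge0 => x _; apply: vweight_ge0.
apply: (key (u :: s)) => //=.
- by rewrite evu.
- by rewrite in_cons negb_or nvu nvs.
- by rewrite big_cons.
Qed.

Lemma rho_step (R : realType) (V : finType) (e : rel V) (W : V -> R) (E : R) v u :
  e v u -> (rhoE e W E v <= (vweight e W E v)%:E + rhoE e W E u)%E.
Proof.
move=> evu; rewrite -leeBlDl //; apply/ereal_infP => y [s [[ps us] hl] <-].
by rewrite leeBlDl // -EFinD; apply: rho_path.
Qed.

Definition hh (R : realType) (V : finType) (e : rel V) (W : V -> R) (E : R) v : R :=
  fine (expeR (- rhoE e W E v)).

Lemma hE (R : realType) (V : finType) (e : rel V) (W : V -> R) (E : R) v :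
  (hh e W E v)%:E = expeR (- rhoE e W E v).
Proof.
rewrite /hh; have := rho_ge0 e W E v.
by case: (rhoE e W E v) => [r| |] //= _.
Qed.

Lemma hh_ge0 (R : realType) (V : finType) (e : rel V) (W : V -> R) (E : R) v :
  0 <= hh e W E v.
Proof. by rewrite -lee_fin hE expeR_ge0. Qed.

Lemma hh_allowed (R : realType) (V : finType) (e : rel V) (W : V -> R) (E : R) v :
  W v <= E -> 1 <= hh e W E v.
Proof.
move=> hv; rewrite -lee_fin hE -expeR0 lee_expeR oppe_ge0.
exact: rho_allowed.
Qed.

Lemma hh_step (R : realType) (V : finType) (e : rel V) (W : V -> R) (E : R) v u :
  E < W v -> e v u ->
  hh e W E u * (deg e v)%:R <= ((deg e v)%:R + (W v - E)) * hh e W E v.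
Proof.
move=> hv evu.
set d := (deg e v)%:R; set a := W v - E.
have dpos : 0 < d.
  rewrite /d ltr0n /deg; apply/card_gt0P; exists u; by rewrite in_setE.
have apos : 0 < a by rewrite /a subr_gt0.
have H : ((expR (- vweight e W E v) * hh e W E u)%:E <= (hh e W E v)%:E)%E.
  rewrite EFinM !hE.
  have -> : (expR (- vweight e W E v))%:E = expeR (- (vweight e W E v)%:E) by [].
  rewrite -expeRD lee_expeR -oppeD // leeN2; exact: rho_step.
move: H; rewrite lee_fin.
set x := 1 + a / d.
have xpos : 0 < x by rewrite /x; apply: addr_gt0 => //; apply: divr_gt0.
have -> : vweight e W E v = ln x.
  by rewrite /vweight /pospart max_l ?ltW.
rewrite expRN lnK ?posrE // => H.
have := ler_wpM2l (ltW (mulr_gt0 xpos dpos)) H.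
have xd : x * d = d + a by rewrite /x mulrDl mul1r divfK // gt_eqF.
rewrite xd; apply: le_trans; rewrite -xd.
have xn0 : x != 0 by rewrite gt_eqF.
have -> : x * d * (x^-1 * hh e W E u) = hh e W E u * d by field.
by [].
Qed.

Lemma linf_ge (R : realType) (V : finType) (phi : V -> R) x :
  `|phi x| <= linf_norm phi.
Proof.
rewrite /linf_norm; have : x \in index_enum V by rewrite mem_index_enum.
elim: (index_enum V) => // y s IH.
rewrite in_cons big_cons le_max => /orP[/eqP->|/IH->]; by rewrite ?lexx ?orbT.
Qed.

Lemma linf_ge0 (R : realType) (V : finType) (phi : V -> R) :
  0 <= linf_norm phi.
Proof.
rewrite /linf_norm; apply: (big_ind (fun y : R => 0 <= y)) => //.
  by move=> x y hx _; rewrite le_max hx.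
Qed.

Theorem mainTheorem1 (R : realType) (V : finType) (e : rel V)
    (W phi : V -> R) (E : R) :
  simple_graph e -> graph_connected e ->
  schrodinger_eq e W phi E ->
  forall v : V,
    ((`|phi v|)%:E <= expeR (- rhoE e W E v) * (linf_norm phi)%:E)%E.
Proof.
move=> _ _ Heq v.
rewrite -hE -EFinM lee_fin mulrC.
set M := linf_norm phi.
have M0 : 0 <= M := linf_ge0 phi.
have hM : forall x, `|phi x| <= M := linf_ge phi.
pose f x := `|phi x| - M * hh e W E x.
suff : f v <= 0 by rewrite subr_le0.
case: (@arg_maxP _ _ _ v xpredT f isT) => x0 _ Hmax.
apply: le_trans (Hmax v isT) _.
rewrite leNgt; apply/negP => fpos.
have [hal|hfor] := leP (W x0) E.
  have : f x0 <= 0.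
    rewrite /f subr_le0; apply: le_trans (hM x0) _.
    by rewrite -{1}(mulr1 M) ler_wpM2l // hh_allowed.
  by rewrite leNgt fpos.
pose d : R := (deg e x0)%:R; pose a := W x0 - E.
have apos : 0 < a by rewrite /a subr_gt0.
have eqS : (d + a) * phi x0 = \sum_(u | e x0 u) phi u.
  have H := Heq x0.
  have -> : \sum_(u | e x0 u) phi u = d * phi x0 + W x0 * phi x0 - E * phi x0.
    rewrite -H /d; ring.
  rewrite /a; ring.
have hQ : (d + a) * `|phi x0| <= \sum_(u | e x0 u) `|phi u|.
  have dapos : 0 < d + a by apply: ltr_wpDl; rewrite ?ler0n.
  rewrite -{1}(ger0_norm (ltW dapos)) -normrM eqS.
  exact: ler_norm_sum.
have hphi : `|phi x0| = f x0 + M * hh e W E x0 by rewrite /f subrK.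
have [d0|dpos] := eqVneq (deg e x0) 0%N.
  have emp : e x0 =1 xpred0.
    move=> u /=; have := card0_eq d0 u.
    by move=> h; apply/negP => eu; move: h; rewrite (mem_set (eu : [set y | e x0 y]%classic u)).
  move: hQ; rewrite big_pred0 // /d d0 add0r => hQ.
  have : `|phi x0| <= 0.
    by rewrite -(pmulr_rle0 _ apos).
  rewrite hphi => h2.
  have := mulr_ge0 M0 (hh_ge0 e W E x0).
  lra.
have dpos' : 0 < d by rewrite /d ltr0n lt0n.
have cnt : forall c : R, \sum_(u | e x0 u) c = c * d.
  move=> c; rewrite (eq_bigl (mem [set y | e x0 y]%classic)); last by move=> y /=; apply/idP/idP => [h|/set_mem //]; apply: mem_set.
  by rewrite sumr_const mulr_natr.
have hQ2 : \sum_(u | e x0 u) `|phi u| <= d * f x0 + M * \sum_(u | e x0 u) hh e W E u.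
  rewrite mulr_sumr -[d * f x0]mulrC -cnt -big_split /=.
  apply: ler_sum => u _; rewrite -lerBlDr; exact: (Hmax u isT).
have hT : (\sum_(u | e x0 u) hh e W E u) * d <= (d + a) * hh e W E x0 * d.
  rewrite mulr_suml -cnt; apply: ler_sum => u eu; exact: hh_step.
set T := \sum_(u | e x0 u) hh e W E u in hQ2 hT.
set Q := \sum_(u | e x0 u) `|phi u| in hQ hQ2.
set F := f x0 in fpos hphi hQ2.
set P := `|phi x0| in hQ hphi.
set H := hh e W E x0 in hphi hT.
have H0 : 0 <= H := hh_ge0 e W E x0.
have d0 : 0 <= d := ltW dpos'.
have h1 := ler_wpM2r d0 hQ.
have h2 := ler_wpM2r d0 hQ2.
have h3 := ler_wpM2l M0 hT.
have h4 : 0 < a * d * F by rewrite !mulr_gt0.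
rewrite hphi in h1.
nra.
Qed.
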